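(* The unary language $\mathtt{UGAUSS}=\{a^{n^2+n}\mid n\in\mathbb{N}\}$ is recognized by some real-time deterministic $2$-counter automaton (rtD2CA).
   Context: Here $\mathbb{N}=\{0,1,2,\dots\}$. A real-time deterministic $k$-counter automaton (rtD$k$CA) is a 5-tuple $(Q,\Sigma,\delta,q_0,Q_a)$ with finite state set $Q$, initial state $q_0$, accept states $Q_a\subseteq Q$, and $k$ integer counters initially $0$. The input $w$ is read as $\cent w\$$ left to right, one symbol per step. The transition function $\delta(q,\sigma,\theta)=(q',c)$, where $\theta\in\{0,\pm\}^k$ records for each counter whether it is zero or nonzero and $c\in\{-1,0,1\}^k$, means: in state $q$ reading $\sigma$ with counter status $\theta$, move the head right, go to $q'$ and add $c$ to the counters. The input is accepted iff the machine is in an accept state after scanning $\$$. *)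

(* Defs.v *)
From mathcomp Require Import all_boot.
From Stdlib Require Import ZArith.
Set Implicit Arguments. Unset Strict Implicit. Unset Printing Implicit Defensive.

Inductive tape_sym (Sigma : Type) : Type :=
| Cent : tape_sym Sigma
| Dollar : tape_sym Sigma
| Letter : Sigma -> tape_sym Sigma.
Arguments Cent {Sigma}. Arguments Dollar {Sigma}.

Inductive cupd : Type := CDec | CStay | CInc.
Definition cupd_val (u : cupd) : Z :=
  match u with CDec => (-1)%Z | CStay => 0%Z | CInc => 1%Z end.

(* A real-time deterministic k-counter automaton (Q, Sigma, delta, q0, Q_a).
   The counter status theta : 'I_k -> bool records for each counter
   whether it is zero (true) or nonzero (false). *)
Record rtDCA (k : nat) (Sigma : Type) := RtDCA {
  rt_state : finType;
  rt_delta : rt_state -> tape_sym Sigma -> ('I_k -> bool) -> rt_state * ('I_k -> cupd);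
  rt_q0 : rt_state;
  rt_acc : pred rt_state
}.

Section Run.
Variables (k : nat) (Sigma : Type) (M : rtDCA k Sigma).

Definition config := (rt_state M * ('I_k -> Z))%type.

Definition step (c : config) (s : tape_sym Sigma) : config :=
  let: (q, ctr) := c in
  let theta := fun i => (ctr i =? 0)%Z in
  let: (q', upd) := rt_delta q s theta in
  (q', fun i => (ctr i + cupd_val (upd i))%Z).

Definition tape (w : seq Sigma) : seq (tape_sym Sigma) :=
  Cent :: map (@Letter Sigma) w ++ [:: Dollar].

Definition final_config (w : seq Sigma) : config :=
  foldl step (rt_q0 M, fun _ => 0%Z) (tape w).

Definition accepts (w : seq Sigma) : bool := @rt_acc k Sigma M (final_config w).1.
End Run.

Definition UGAUSS (w : seq unit) : Prop := exists n : nat, size w = n * n + n.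

(* Main.v *)
From Stdlib Require Import ZArith Lia.
Require Import Defs.
From mathcomp Require Import all_boot.
From mathcomp Require Import zify.
Set Implicit Arguments. Unset Strict Implicit. Unset Printing Implicit Defensive.

Definition c1 : 'I_2 := ord0.
Definition c2 : 'I_2 := ord_max.

Definition mku (u0 u1 : cupd) : 'I_2 -> cupd :=
  fun i => if nat_of_ord i == 0 then u0 else u1.

Definition gdelta (q : bool * bool) (s : tape_sym unit) (th : 'I_2 -> bool)
  : (bool * bool) * ('I_2 -> cupd) :=
  match s with
  | Cent => (q, fun _ => CStay)
  | Dollar => ((q.1, if q.1 then th c2 else th c1 && th c2), fun _ => CStay)
  | Letter _ =>
    if q.1 then
      if th c2 then ((false, false), mku CDec CInc)
      else ((true, false), mku CInc CDec)
    else
      if th c1 then ((true, false), mku CStay CInc)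
      else ((false, false), mku CDec CInc)
  end.

Definition GM : rtDCA 2 unit :=
  @RtDCA 2 unit (bool * bool)%type gdelta (false, false) (fun q => q.2).

Definition R (m : nat) : config GM :=
  foldl (@step 2 unit GM) (step (rt_q0 GM, fun _ => 0%Z) Cent) (nseq m (Letter tt)).

Lemma R_S m : R m.+1 = step (R m) (Letter tt).
Proof. by rewrite /R -[m.+1]addn1 nseqD foldl_cat. Qed.

Definition Good (c : config GM) (n j : nat) : Prop :=
  if j <= n then c.1 = (false, false) /\ c.2 c1 = Z.of_nat (n - j) /\ c.2 c2 = Z.of_nat j
  else c.1 = (true, false) /\ c.2 c1 = Z.of_nat (j - n - 1) /\ c.2 c2 = Z.of_nat (2 * n + 2 - j).

Lemma R_good m : 0 < m -> exists n j, 0 < j <= 2 * n + 2 /\ m = n * n + n + j /\ Good (R m) n j.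
Proof.
elim: m => [//|m IH] _.
case: m IH => [|m] IH.
  exists 0, 1; split => //; split => //.
have [n [j [Hj [Hm HG]]]] := IH isT.
rewrite R_S.
move: HG; rewrite /Good.
case: (R m.+1) => q ctr /=.
have E1 : (ctr c1 =? 0)%Z = (ctr c1 =? 0)%Z by [].
case: (leqP j n) => Hjn [-> [H1 H2]].
- rewrite /step /= ?H1 ?H2.
  have Hz2 : (Z.of_nat j =? 0)%Z = false by apply/Z.eqb_neq; lia.
  rewrite ?Hz2.
  case: (ltnP j n) => Hjn'.
  + have Hz1 : (Z.of_nat (n - j) =? 0)%Z = false by apply/Z.eqb_neq; lia.
    rewrite ?Hz1 /=.
    exists n, j.+1; split; first lia; split; first lia.
    rewrite Hjn' /mku /=; split => //; split; lia.
  + have Hz1 : (Z.of_nat (n - j) =? 0)%Z = true by apply/Z.eqb_eq; lia.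
    rewrite ?Hz1 /=.
    exists n, j.+1; split; first lia; split; first lia.
    have -> : (j.+1 <= n) = false by lia.
    rewrite /mku /= ?H1 ?H2; split => //; split; lia.
- rewrite /step /= ?H1 ?H2.
  case: (ltnP j (2 * n + 2)) => Hj2.
  + have Hz2 : (Z.of_nat (2 * n + 2 - j) =? 0)%Z = false by apply/Z.eqb_neq; lia.
    rewrite ?Hz2 /=.
    exists n, j.+1; split; first lia; split; first lia.
    have -> : (j.+1 <= n) = false by lia.
    rewrite /mku /= ?H1 ?H2; split => //; split; lia.
  + have Hz2 : (Z.of_nat (2 * n + 2 - j) =? 0)%Z = true by apply/Z.eqb_eq; lia.
    rewrite ?Hz2 /=.
    exists n.+1, 1; split; first lia; split; first lia.
    have -> : (1 <= n.+1) = true by [].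
    rewrite /mku /= ?H1 ?H2; split => //; split; lia.
Qed.

Theorem theorem3 :
  exists M : rtDCA 2 unit, forall w : seq unit, accepts M w <-> UGAUSS w.
Proof.
exists GM => w.
have Hw : w = nseq (size w) tt.
  by elim: w => [|[] w IH] //=; rewrite -IH.
have Hacc : accepts GM w = (step (R (size w)) Dollar).1.2.
  rewrite /accepts /final_config /tape /R {1}Hw /= foldl_cat /= map_nseq //.
rewrite Hacc /UGAUSS.
case: (posnP (size w)) => Hs.
  rewrite Hs /=; split => // _; by exists 0.
have [n [j [Hj [Hm HG]]]] := R_good Hs.
move: HG; rewrite /Good.
case: (R (size w)) => q ctr /=.
case: (leqP j n) => Hjn [-> [H1 H2]]; rewrite /step /= ?H1 ?H2.
- have Hz2 : (Z.of_nat j =? 0)%Z = false by apply/Z.eqb_neq; lia.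
  rewrite Hz2 andbF; split => // [[k Hk]].
  exfalso; rewrite Hm in Hk.
  case: (leqP k n) => Hk'; first nia.
  nia.
- split.
  + move/Z.eqb_eq => Hz; exists n.+1; lia.
  + move=> [k Hk]; apply/Z.eqb_eq; rewrite Hm in Hk.
    case: (leqP k n) => Hk'; first nia.
    case: (leqP k n.+1) => Hk''; last nia.
    have Ek : k = n.+1 by lia.
    subst k; nia.
Qed.
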